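(* Let $X$ be a topological space, $Y$ an infinite completely regular space, and $(g,h)$ a stable pair of Hahn on $X$. Then there exists a separately continuous function $f:X\times Y\to\overline{\mathbb R}$ such that $\min_{y\in Y}f(x,y)=g(x)$ and $\max_{y\in Y}f(x,y)=h(x)$ for every $x\in X$ (in particular $\wedge_f=g$ and $\vee_f=h$).
   Context: Completely regular spaces are assumed $T_1$. $\overline{\mathbb R}=[-\infty,+\infty]$. $\wedge_f(x)=\inf_{y\in Y}f(x,y)$, $\vee_f(x)=\sup_{y\in Y}f(x,y)$. A pair $(g,h)$ of functions $X\to\overline{\mathbb R}$ is a stable pair of Hahn if there are continuous $u_n:X\to\overline{\mathbb R}$ with $g(x)=\min_{n\in\mathbb N}u_n(x)$ and $h(x)=\max_{n\in\mathbb N}u_n(x)$ for all $x\in X$ (attained). $f$ is separately continuous if it is continuous in each variable when the other is fixed. *)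

(* Defs.v *)
From HB Require Import structures.
From mathcomp Require Import all_boot all_order all_algebra.
From mathcomp Require Import all_classical all_reals all_analysis.
Set Implicit Arguments. Unset Strict Implicit. Unset Printing Implicit Defensive.
Import Order.TTheory GRing.Theory Num.Theory numFieldTopology.Exports numFieldNormedType.Exports.
Local Open Scope classical_set_scope.
Local Open Scope ring_scope.

(* Completely regular (Tychonoff convention of the paper: includes T1):
   points and closed sets are separated by continuous real-valued functions. *)
Definition completely_regular (R : realType) (T : topologicalType) : Prop :=
  accessible_space T /\
  forall (a : T) (B : set T), closed B -> ~ B a ->
    exists u : T -> R, continuous u /\ u a = 0 /\ (forall b, B b -> u b = 1).

Definition is_min_attained (R : realType) (I : Type) (F : I -> \bar R) (m : \bar R) :=
  (exists i, F i = m) /\ (forall i, (m <= F i)%E).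
Definition is_max_attained (R : realType) (I : Type) (F : I -> \bar R) (m : \bar R) :=
  (exists i, F i = m) /\ (forall i, (F i <= m)%E).

Definition stable_Hahn_pair (R : realType) (X : topologicalType)
  (g h : X -> \bar R) : Prop :=
  exists u : nat -> X -> \bar R,
    (forall n, continuous (u n)) /\
    (forall x, is_min_attained (fun n => u n x) (g x)
            /\ is_max_attained (fun n => u n x) (h x)).

Definition separately_continuous (R : realType) (X Y : topologicalType)
  (f : X * Y -> \bar R) : Prop :=
  (forall x : X, continuous (fun y : Y => f (x, y))) /\
  (forall y : Y, continuous (fun x : X => f (x, y))).

(* Main.v *)
Require Import Defs.
From HB Require Import structures.
From mathcomp Require Import all_boot all_order all_algebra.
From mathcomp Require Import all_classical all_reals all_analysis.
From mathcomp Require Import ring lra.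
Set Implicit Arguments. Unset Strict Implicit. Unset Printing Implicit Defensive.
Import Order.TTheory GRing.Theory Num.Theory numFieldTopology.Exports numFieldNormedType.Exports.
Local Open Scope classical_set_scope.
Local Open Scope ring_scope.
Section Helpers.
Variable R : realType.
Variable T : topologicalType.
Implicit Types f g : T -> R.
Lemma cC (c : R) : continuous (fun _ : T => c).
Proof. exact: cst_continuous. Qed.
Lemma cD f g : continuous f -> continuous g -> continuous (fun t => f t + g t).
Proof. by move=> cf cg x; exact: (continuousD (cf x) (cg x)). Qed.
Lemma cM f g : continuous f -> continuous g -> continuous (fun t => f t * g t).
Proof. by move=> cf cg x; exact: (continuousM (cf x) (cg x)). Qed.
Lemma cN f : continuous f -> continuous (fun t => - f t).
Proof. by move=> cf x; exact: (continuousN (cf x)). Qed.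
Lemma cB f g : continuous f -> continuous g -> continuous (fun t => f t - g t).
Proof. by move=> cf cg; apply: cD => //; apply: cN. Qed.
Lemma cMin f g : continuous f -> continuous g -> continuous (fun t => Num.min (f t) (g t)).
Proof. move=> cf cg. exact: min_fun_continuous. Qed.
Lemma cMax f g : continuous f -> continuous g -> continuous (fun t => Num.max (f t) (g t)).
Proof. move=> cf cg. exact: max_fun_continuous. Qed.
End Helpers.

Lemma contract_cont (R : realType) (T : topologicalType) (F : T -> \bar R) :
  continuous F <-> continuous (fun t => contract (F t)).
Proof.
split => cF x.
- have := (cvg_ballP _ _).1 (cF x) => H.
  apply/cvg_ballP => e e0.
  have HH := H (nbhs_filter x) e e0; move: HH; apply: filterS => t.
  by rewrite /ball /= /ereal_ball.
- have := (cvg_ballP _ _).1 (cF x) => H.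
  apply/cvg_ballP => e e0.
  have HH := H (nbhs_filter x) e e0; move: HH; apply: filterS => t.
  by rewrite /ball /= /ereal_ball.
Qed.

Section Yside.
Variable R : realType.
Variable Y : topologicalType.

Definition Inv (psi : Y -> R) := continuous psi /\ (forall y, 0 <= psi y) /\
  infinite_set [set y | 0 < psi y].

Definition Spec (psi : Y -> R) (t : (Y -> R) * (Y -> R) * Y) :=
  continuous t.1.1 /\ Inv t.1.2 /\ (forall y, 0 <= t.1.1 y <= 1) /\ t.1.1 t.2 = 1 /\
   (forall y, t.1.1 y != 0 -> 0 < psi y) /\
   (forall y, t.1.1 y != 0 -> t.1.2 y = 0) /\
   (forall y, 0 < t.1.2 y -> 0 < psi y).

Lemma step_core (psi : Y -> R) (a : Y) (u : Y -> R) : Inv psi -> 0 < psi a ->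
  continuous u -> u a = 0 -> infinite_set [set y | 0 < psi y /\ 3^-1 < u y] ->
  exists t, Spec psi t.
Proof.
move=> [cpsi [psi0 _]] pa0 cu ua0 inf.
pose phi := fun y => Num.min 1 (psi y / psi a) * Num.min 1 (Num.max 0 (1 - 3 * u y)).
pose psi' := fun y => Num.min (psi y) (Num.max 0 (u y - 3^-1)).
exists (phi, psi', a); rewrite /Spec /=; split; [|split; [|split; [|split; [|split; [|split]]]]].
- apply: cM; apply: cMin; try exact: cC.
    by apply: cM => //; exact: cC.
  apply: cMax; first exact: cC.
  by apply: cB; [exact: cC| apply: cM => //; exact: cC].
- split; first by apply: cMin => //; apply: cMax; [exact: cC| apply: cB => //; exact: cC].
  split; first by move=> y; rewrite /psi' le_min psi0 le_max lexx.
  apply: sub_infinite_set inf => y [py uy].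
  by rewrite /psi' /= lt_min py lt_max subr_gt0 uy orbT.
- move=> y; rewrite /phi; apply/andP; split.
    apply: mulr_ge0; rewrite le_min ler01 /=.
      by apply: divr_ge0 => //; exact: ltW.
    by rewrite le_max lexx.
  apply: mulr_ile1; rewrite ?ge_min ?lexx //.
    by rewrite le_min ler01; apply: divr_ge0 => //; exact: ltW.
  by rewrite le_min ler01 le_max lexx.
- by rewrite /phi divff ?gt_eqF // ua0 mulr0 subr0 (max_r ler01) minxx mulr1.
- move=> y; rewrite /phi; apply: contraNT; rewrite -leNgt => py.
  have -> : psi y = 0 by apply/eqP; rewrite eq_le py psi0.
  by rewrite mul0r min_r ?lexx // mul0r.
- move=> y; rewrite /phi /psi' => ph.
  have uy : u y < 3^-1.
    rewrite ltNge; apply/negP => uy; move: ph; apply/negP; rewrite negbK.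
    have -> : Num.max 0 (1 - 3 * u y) = 0 by apply/max_l; lra.
    by rewrite (min_r ler01) mulr0.
  have -> : Num.max 0 (u y - 3^-1) = 0 by apply/max_l; lra.
  by rewrite (min_r (psi0 y)).
- move=> y; rewrite /psi' lt_min => /andP[] //.
Qed.

Lemma step (psi : Y -> R) : completely_regular R Y -> Inv psi -> exists t, Spec psi t.
Proof.
move=> [acc sep] Ipsi; have [cpsi [psi0 inf]] := Ipsi.
have [a pa] := infinite_setN0 inf.
have [b [pb ba]] : exists b, 0 < psi b /\ b <> a.
  apply: contrapT => nb; apply: inf; apply: (@sub_finite_set _ _ [set a]); last exact: finite_set1.
  move=> y py; apply: contrapT => ya; apply: nb; exists y; split => //.
have [u [cu [ua ub]]] := sep a [set b] (@accessible_closed_set1 _ acc b) (fun h => ba (esym h)).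
have ub1 : u b = 1 by exact: ub.
have [infQ|finQ] := pselect (infinite_set [set y | 0 < psi y /\ 3^-1 < u y]).
  exact: step_core Ipsi pa cu ua infQ.
apply: (@step_core psi b (fun y => 1 - u y)) => //.
- by apply: cB => //; exact: cC.
- by rewrite ub1 subrr.
move=> finP; apply: inf.
apply: (@sub_finite_set _ _ ([set y | 0 < psi y /\ 3^-1 < u y] `|` [set y | 0 < psi y /\ 3^-1 < 1 - u y])).
  move=> y py; have [h|h] := ltP (3^-1) (u y); [left|right]; split => //; lra.
by rewrite finite_setU; split => //; apply: contrapT.
Qed.

Lemma bumps : completely_regular R Y -> infinite_set [set: Y] ->
  exists (phi : nat -> Y -> R) (ys : nat -> Y),
  (forall j, continuous (phi j)) /\ (forall j y, 0 <= phi j y <= 1) /\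
  (forall j, phi j (ys j) = 1) /\
  (forall i j y, phi i y != 0 -> phi j y != 0 -> i = j).
Proof.
move=> cr infY.
have [y0 _] := infinite_setN0 infY.
have : forall psi, exists t, (Inv psi -> Spec psi t).
  move=> psi; case: (pselect (Inv psi)) => [I|nI].
    by have [t Ht] := step cr I; exists t.
  by exists (fun _ => 0, fun _ => 0, y0).
move=> /choice [f Hf].
pose ps n := iter n (fun p => (f p).1.2) (fun _ => 1).
have Ips : forall n, Inv (ps n).
  elim=> [|n IH].
    split; first exact: cC.
    split; first by move=> z; exact: ler01.
    apply: (sub_infinite_set _ infY) => z Hz; exact: ltr01.
  by have [_ [+ _]] := Hf _ IH.
have mono : forall n k y, 0 < ps (k + n)%N y -> 0 < ps n y.
  move=> n; elim=> [//|k IH] y h; apply: IH.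
  by have [_ [_ [_ [_ [_ [_ H]]]]]] := Hf _ (Ips (k + n)%N); apply: H.
exists (fun n => (f (ps n)).1.1), (fun n => (f (ps n)).2).
split; first by move=> j; have [+ _] := Hf _ (Ips j).
split; first by move=> j; have [_ [_ [+ _]]] := Hf _ (Ips j).
split; first by move=> j; have [_ [_ [_ [+ _]]]] := Hf _ (Ips j).
have key : forall i j y, (i < j)%N -> (f (ps i)).1.1 y != 0 -> (f (ps j)).1.1 y != 0 -> False.
  move=> i j y0' ij hi hj.
  have [_ [_ [_ [_ [Hj _]]]]] := Hf _ (Ips j).
  have [_ [_ [_ [_ [_ [Hi _]]]]]] := Hf _ (Ips i).
  have := mono i.+1 (j - i.+1)%N y0'; rewrite subnK // => /(_ (Hj y0' hj)).
  by rewrite /ps /= -/(ps i) (Hi y0' hi) ltxx.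
move=> i j y hi hj; case: (ltngtP i j) => // ij.
- by case: (key _ _ _ ij hi hj).
- by case: (key _ _ _ ij hj hi).
Qed.
End Yside.

Section Xside.
Variable R : realType.
Variable X : topologicalType.
Variable U : nat -> X -> R.
Variables G H : X -> R.
Hypothesis cU : forall n, continuous (U n).
Hypothesis bU : forall n x, -1 <= U n x <= 1.
Hypothesis hG : forall x, (exists n, U n x = G x) /\ (forall n, G x <= U n x).
Hypothesis hH : forall x, (exists n, U n x = H x) /\ (forall n, U n x <= H x).

Fixpoint mn n x := if n is k.+1 then Num.min (mn k x) (U k.+1 x) else U 0 x.
Fixpoint Mx n x := if n is k.+1 then Num.max (Mx k x) (U k.+1 x) else U 0 x.
Definition dl n x := if n is k.+1 then mn k x - mn k.+1 x else 0.
Definition el n x := if n is k.+1 then Mx k.+1 x - Mx k x else 0.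
Definition tent (s : R) := Num.max 0 (Num.min 1 (3 - `|2 * s - 3|)).
Definition Tn (k : nat) (t : R) := tent (k.+1%:R * t).

Lemma cNorm (f : X -> R) : continuous f -> continuous (fun x => `|f x|).
Proof. by move=> cf x; apply: (continuous_comp (cf x)); exact: norm_continuous. Qed.

Lemma cont_mn n : continuous (mn n).
Proof. by elim: n => [|n IH] /=; [exact: cU | apply: cMin]. Qed.
Lemma cont_Mx n : continuous (Mx n).
Proof. by elim: n => [|n IH] /=; [exact: cU | apply: cMax]. Qed.
Lemma cont_dl n : continuous (dl n).
Proof. by case: n => [|n] /=; [exact: cC | apply: cB; apply: cont_mn]. Qed.
Lemma cont_el n : continuous (el n).
Proof. by case: n => [|n] /=; [exact: cC | apply: cB; apply: cont_Mx]. Qed.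
Lemma cont_Tn k (f : X -> R) : continuous f -> continuous (fun x => Tn k (f x)).
Proof.
move=> cf; rewrite /Tn /tent; apply: cMax; first exact: cC.
apply: cMin; first exact: cC.
apply: cB; first exact: cC.
apply: cNorm; apply: cB; last exact: cC.
by apply: cM; [exact: cC| apply: cM => //; exact: cC].
Qed.

Lemma mn_ge n x : G x <= mn n x.
Proof. elim: n => [|n IH] /=; first exact: (hG x).2. by rewrite le_min IH (hG x).2. Qed.
Lemma Mx_le n x : Mx n x <= H x.
Proof. elim: n => [|n IH] /=; first exact: (hH x).2. by rewrite ge_max IH (hH x).2. Qed.
Lemma mn_leU n i x : (i <= n)%N -> mn n x <= U i x.
Proof.
elim: n => [|n IH] /=; first by rewrite leqn0 => /eqP ->.
rewrite leq_eqVlt => /orP[/eqP ->|]; first by rewrite ge_min lexx orbT.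
by rewrite ltnS => /IH h; rewrite ge_min h.
Qed.
Lemma Mx_geU n i x : (i <= n)%N -> U i x <= Mx n x.
Proof.
elim: n => [|n IH] /=; first by rewrite leqn0 => /eqP ->.
rewrite leq_eqVlt => /orP[/eqP ->|]; first by rewrite le_max lexx orbT.
by rewrite ltnS => /IH h; rewrite le_max h.
Qed.
Lemma mn_stab N n x : U N x = G x -> (N <= n)%N -> mn n x = G x.
Proof. by move=> UG Nn; apply/eqP; rewrite eq_le mn_ge -UG mn_leU. Qed.
Lemma Mx_stab N n x : U N x = H x -> (N <= n)%N -> Mx n x = H x.
Proof. by move=> UH Nn; apply/eqP; rewrite eq_le Mx_le -UH Mx_geU. Qed.
Lemma G_bd x : -1 <= G x <= 1.
Proof. by have [[N <-] _] := hG x; exact: bU. Qed.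
Lemma H_bd x : -1 <= H x <= 1.
Proof. by have [[N <-] _] := hH x; exact: bU. Qed.
Lemma dl_ge0 n x : 0 <= dl n x.
Proof. by case: n => [|n] //=; rewrite subr_ge0 ge_min lexx. Qed.
Lemma el_ge0 n x : 0 <= el n x.
Proof. by case: n => [|n] //=; rewrite subr_ge0 le_max lexx. Qed.
Lemma dl_le2 n x : dl n x <= 2.
Proof.
case: n => [|n] /=; first by [].
have := mn_leU x (leq0n n); have := mn_ge n.+1 x; have := G_bd x; have := bU 0 x.
move=> /andP[? ?] /andP[? ?] ? ?; simpl in *; lra.
Qed.
Lemma el_le2 n x : el n x <= 2.
Proof.
case: n => [|n] /=; first by [].
have := Mx_geU x (leq0n n); have := Mx_le n.+1 x; have := H_bd x; have := bU 0 x.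
move=> /andP[? ?] /andP[? ?] ? ?; simpl in *; lra.
Qed.

Lemma tent_bd s : 0 <= tent s <= 1.
Proof.
rewrite /tent le_max lexx /=; rewrite ge_max ler01 /= ge_min lexx //.
Qed.
Lemma tent1 s : 1 <= s <= 2 -> tent s = 1.
Proof.
move=> /andP[s1 s2]; have h : `|2 * s - 3| <= 1 by rewrite ler_norml; apply/andP; split; lra.
rewrite /tent min_l ?max_r //; lra.
Qed.
Lemma tent_nz s : tent s != 0 -> 0 < s < 3.
Proof.
move=> h; have : 0 < 3 - `|2 * s - 3|.
  rewrite ltNge; apply/negP => hle; move: h; rewrite /tent max_l ?eqxx //.
  by rewrite ge_min hle orbT.
rewrite subr_gt0 ltr_norml => /andP[a b]; apply/andP; split; lra.
Qed.
Lemma tent0 : tent 0 = 0.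
Proof. by apply/eqP; apply: contraT => /tent_nz; rewrite ltxx. Qed.
Lemma Tn_ex t : 0 < t <= 2 -> exists k, Tn k t = 1.
Proof.
move=> /andP[t0 t2]; have [t1|t1] := leP 1 t.
  by exists 0%N; rewrite /Tn mul1r tent1 // t1 t2.
exists (Num.truncn (t^-1)); rewrite /Tn; apply: tent1.
have := @truncn_itv _ (t^-1); rewrite invr_ge0 ltW // => /(_ isT) /andP[a b].
set k := Num.truncn _ in a b *.
have e1 : 1 < k.+1%:R * t by move: b; rewrite -[t^-1]mul1r ltr_pdivrMr.
have e2 : k%:R * t <= 1 by move: a; rewrite -[t^-1]mul1r ler_pdivlMr.
rewrite -addn1 natrD mulrDl mul1r; apply/andP; split; lra.
Qed.

Definition Ap (p : bool * nat * nat) x := let: (b, n, k) := p in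
  if b then Num.max (mn n x) (U 0 x - 2 * Tn k (dl n x))
  else Num.min (Mx n x) (U 0 x + 2 * Tn k (el n x)).
Definition aa j x := if @pickle_inv (bool * nat * nat)%type j is Some p then Ap p x else U 0 x.

Lemma cont_aa j : continuous (aa j).
Proof.
rewrite /aa; case: pickle_inv => [[[[] n] k]|]; last exact: cU.
- apply: cMax; first exact: cont_mn.
  apply: cB; first exact: cU.
  by apply: cM; [exact: cC| apply: cont_Tn; exact: cont_dl].
- apply: cMin; first exact: cont_Mx.
  apply: cD; first exact: cU.
  by apply: cM; [exact: cC| apply: cont_Tn; exact: cont_el].
Qed.

Lemma Tn_bd k t : 0 <= Tn k t <= 1.
Proof. exact: tent_bd. Qed.

Lemma aa_bd j x : G x <= aa j x <= H x.
Proof.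
have G0 := (hG x).2 0%N; have H0 := (hH x).2 0%N.
rewrite /aa; case: pickle_inv => [[[[] n] k]|] /=; last by rewrite G0 H0.
- have := Tn_bd k (dl n x) => /andP[t0 t1].
  have := mn_ge n x; have := mn_leU x (leq0n n) => m1 m2.
  rewrite le_max m2 /= ge_max; apply/andP; split; lra.
- have := Tn_bd k (el n x) => /andP[t0 t1].
  have := Mx_le n x; have := Mx_geU x (leq0n n) => m1 m2.
  rewrite le_min ge_min m2 /= andbT; apply/andP; split; lra.
Qed.

Lemma aa_pickle p x : aa (pickle p) x = Ap p x.
Proof. by rewrite /aa pickleK_inv. Qed.

Lemma aa_minatt x : exists j, aa j x = G x.
Proof.
have exP : exists n, mn n x == G x.
  by have [[N hN] _] := hG x; exists N; rewrite (mn_stab hN (leqnn N)).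
case: (ex_minnP exP) => N /eqP hN minN.
case: N hN minN => [|k] hN minN.
  exists (pickle (true, 0%N, 0%N)); rewrite aa_pickle /= /Tn mulr0 tent0 mulr0 subr0.
  by rewrite maxxx.
have hk : mn k x != G x by apply/negP => /minN; rewrite ltnn.
have dE : dl k.+1 x = mn k x - G x by rewrite -hN.
have d0 : 0 < dl k.+1 x.
  by rewrite dE subr_gt0 lt_neqAle eq_sym hk /=; exact: mn_ge.
have [kk hkk] : exists kk, Tn kk (dl k.+1 x) = 1 by apply: Tn_ex; rewrite d0 dl_le2.
exists (pickle (true, k.+1, kk)); rewrite aa_pickle /= hkk.
rewrite -[Num.min _ _]/(mn k.+1 x) hN max_l //.
have := G_bd x; have := bU 0 x => /andP[? ?] /andP[? ?]; lra.
Qed.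

Lemma aa_maxatt x : exists j, aa j x = H x.
Proof.
have exP : exists n, Mx n x == H x.
  by have [[N hN] _] := hH x; exists N; rewrite (Mx_stab hN (leqnn N)).
case: (ex_minnP exP) => N /eqP hN minN.
case: N hN minN => [|k] hN minN.
  exists (pickle (false, 0%N, 0%N)); rewrite aa_pickle /= /Tn mulr0 tent0 mulr0 addr0.
  by rewrite minxx.
have hk : Mx k x != H x by apply/negP => /minN; rewrite ltnn.
have dE : el k.+1 x = H x - Mx k x by rewrite -hN.
have d0 : 0 < el k.+1 x.
  by rewrite dE subr_gt0 lt_neqAle hk /=; exact: Mx_le.
have [kk hkk] : exists kk, Tn kk (el k.+1 x) = 1 by apply: Tn_ex; rewrite d0 el_le2.
exists (pickle (false, k.+1, kk)); rewrite aa_pickle /= hkk.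
rewrite -[Num.max _ _]/(Mx k.+1 x) hN min_l //.
have := H_bd x; have := bU 0 x => /andP[? ?] /andP[? ?]; lra.
Qed.

Fixpoint smax (F : nat -> nat) m := if m is m'.+1 then maxn (F m') (smax F m') else 0%N.
Lemma smax_ge F m i : (i < m)%N -> (F i <= smax F m)%N.
Proof.
elim: m => [//|m IH] /=; rewrite ltnS leq_eqVlt => /orP[/eqP ->|/IH h].
  exact: leq_maxl.
exact: leq_trans h (leq_maxr _ _).
Qed.

Lemma dl_stab x N n : U N x = G x -> (N < n)%N -> dl n x = 0.
Proof.
case: n => [//|k] hN; rewrite ltnS => Nk.
have -> : dl k.+1 x = mn k x - mn k.+1 x by [].
by rewrite (mn_stab hN Nk) (mn_stab hN (leqW Nk)) subrr.
Qed.
Lemma el_stab x N n : U N x = H x -> (N < n)%N -> el n x = 0.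
Proof.
case: n => [//|k] hN; rewrite ltnS => Nk.
have -> : el k.+1 x = Mx k.+1 x - Mx k x by [].
by rewrite (Mx_stab hN Nk) (Mx_stab hN (leqW Nk)) subrr.
Qed.

Lemma Tn_nz k t : Tn k t != 0 -> 0 < t /\ (k <= Num.truncn (3 / t))%N.
Proof.
move=> /tent_nz /andP[a b].
have t0 : 0 < t by move: a; rewrite pmulr_rgt0 // ltr0n.
split => //; rewrite truncn_ge_nat; last by apply: divr_ge0 => //; exact: ltW.
rewrite ler_pdivlMr //; apply: le_trans (ltW b).
by rewrite ler_pM2r // ler_nat.
Qed.

Lemma aa_fin x : exists B, forall j, (B <= j)%N -> aa j x = U 0 x.
Proof.
have [[N1 h1] _] := hG x; have [[N2 h2] _] := hH x.
pose N := maxn N1 N2.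
pose K := smax (fun n => maxn (Num.truncn (3 / dl n x)) (Num.truncn (3 / el n x))) N.+1.
pose B := (smax (fun n => smax (fun k => maxn (pickle (true, n, k)) (pickle (false, n, k))) K.+1) N.+1).+1.
have hb : forall (b : bool) (n k : nat), (n <= N)%N -> (k <= K)%N -> (pickle (b, n, k) < B)%N.
  move=> b n k nN kK; rewrite /B ltnS.
  apply: (leq_trans _ (smax_ge (fun n => smax (fun k => maxn (pickle (true, n, k)) (pickle (false, n, k))) K.+1) (nN : (n < N.+1)%N))) => /=.
  apply: (leq_trans _ (smax_ge (fun k => maxn (pickle (true, n, k)) (pickle (false, n, k))) (kK : (k < K.+1)%N))) => /=.
  by case: b; [exact: leq_maxl | exact: leq_maxr].
exists B => j Bj; rewrite /aa.
have := @pickle_invK (bool * nat * nat)%type j; case: pickle_inv => [[[b n] k]|] //= hj.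
apply/eqP; apply: contraT => ne.
suff [nN kK] : (n <= N)%N /\ (k <= K)%N.
  by have := hb b n k nN kK; rewrite hj ltnNge Bj.
case: b hj ne => hj ne.
- have Tnz : Tn k (dl n x) != 0.
    apply: contra ne => /eqP ->; rewrite mulr0 subr0; apply/eqP/max_r.
    exact: mn_leU.
  have [d0 kd] := Tn_nz Tnz.
  have nN1 : (n <= N1)%N by rewrite leqNgt; apply/negP => /(dl_stab h1) d; move: d0; rewrite d ltxx.
  split; first exact: leq_trans nN1 (leq_maxl _ _).
  apply: leq_trans kd _; apply: leq_trans (leq_maxl _ (Num.truncn (3 / el n x))) _.
  apply: (smax_ge (fun n => maxn (Num.truncn (3 / dl n x)) (Num.truncn (3 / el n x)))).
  by rewrite ltnS; exact: leq_trans nN1 (leq_maxl _ _).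
- have Tnz : Tn k (el n x) != 0.
    apply: contra ne => /eqP ->; rewrite mulr0 addr0; apply/eqP/min_r.
    exact: Mx_geU.
  have [d0 kd] := Tn_nz Tnz.
  have nN2 : (n <= N2)%N by rewrite leqNgt; apply/negP => /(el_stab h2) d; move: d0; rewrite d ltxx.
  split; first exact: leq_trans nN2 (leq_maxr _ _).
  apply: leq_trans kd _; apply: leq_trans (leq_maxr (Num.truncn (3 / dl n x)) _) _.
  apply: (smax_ge (fun n => maxn (Num.truncn (3 / dl n x)) (Num.truncn (3 / el n x)))).
  by rewrite ltnS; exact: leq_trans nN2 (leq_maxr _ _).
Qed.
End Xside.

Section Combine.
Variable R : realType.

Lemma cSum (T : topologicalType) n (h : nat -> T -> R) : (forall j, continuous (h j)) ->
  continuous (fun y => \sum_(j < n) h j y).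
Proof.
move=> ch; elim: n => [|n IH].
  have -> : (fun y => \sum_(j < 0) h j y) = (fun _ => 0) by apply: funext => y; rewrite big_ord0.
  exact: cC.
have -> : (fun y => \sum_(j < n.+1) h j y) = (fun y => \sum_(j < n) h j y + h n y).
  by apply: funext => y; rewrite big_ord_recr.
exact: cD.
Qed.

Lemma sum_single n (t : nat -> R) j0 : (forall j, j != j0 -> t j = 0) ->
  \sum_(j < n) t j = if (j0 < n)%N then t j0 else 0.
Proof.
move=> h; elim: n => [|n IH]; first by rewrite big_ord0.
rewrite big_ord_recr /= IH ltnS (leq_eqVlt j0 n).
case: (eqVneq n j0) => [->|nj].
  by rewrite ltnn add0r.
by rewrite (h _ nj) addr0.
Qed.

Lemma combine (X Y : topologicalType) (c : X -> R) (a : nat -> X -> R)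
  (phi : nat -> Y -> R) (ys : nat -> Y) (lo hi : X -> R) :
  continuous c -> (forall j, continuous (a j)) -> (forall j, continuous (phi j)) ->
  (forall j y, 0 <= phi j y <= 1) -> (forall j, phi j (ys j) = 1) ->
  (forall i j y, phi i y != 0 -> phi j y != 0 -> i = j) ->
  (forall x, exists B, forall j, (B <= j)%N -> a j x = c x) ->
  (forall x, lo x <= c x <= hi x) -> (forall j x, lo x <= a j x <= hi x) ->
  exists F : X -> Y -> R, (forall x, continuous (F x)) /\
    (forall y, continuous (fun x => F x y)) /\ (forall x y, lo x <= F x y <= hi x) /\
    (forall x j, F x (ys j) = a j x).
Proof.
move=> cc ca cphi bphi phiy disj /choice [B hB] bc ba.
pose F x y := c x + \sum_(j < B x) phi j y * (a j x - c x).
have single : forall y j0, (forall j, j != j0 -> phi j y = 0) ->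
    forall x, F x y = c x + phi j0 y * (a j0 x - c x).
  move=> y j0 h x; rewrite /F (@sum_single _ (fun j => phi j y * (a j x - c x)) j0).
    case: ifP => // /negbT; rewrite -leqNgt => /hB ->.
    by rewrite subrr mulr0.
  by move=> j /h ->; rewrite mul0r.
have sing : forall y, exists j0, forall x, F x y = c x + phi j0 y * (a j0 x - c x).
  move=> y; case: (pselect (exists j0, phi j0 y != 0)) => [[j0 hj0]|nz].
    exists j0; apply: single => j jj0; apply/eqP; apply: contraT => hj.
    by move: jj0; rewrite (disj _ _ _ hj hj0) eqxx.
  exists 0%N; apply: single => j _; apply/eqP; apply: contraT => hj.
  by case: nz; exists j.
exists F; split.
  move=> x; rewrite /F; apply: cD; first exact: cC.
  apply: (@cSum Y (B x) (fun j y => phi j y * (a j x - c x))) => j; apply: cM => //; exact: cC.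
split.
  move=> y; have [j0 hj0] := sing y.
  have -> : (fun x => F x y) = (fun x => c x + phi j0 y * (a j0 x - c x)) by apply: funext.
  apply: cD => //; apply: cM; first exact: cC.
  exact: cB.
split.
  move=> x y; have [j0 ->] := sing y.
  have /andP[p0 p1] := bphi j0 y; have /andP[c0 c1] := bc x; have /andP[a0 a1] := ba j0 x.
  have h1 : 0 <= (1 - phi j0 y) * (c x - lo x) by apply: mulr_ge0; lra.
  have h2 : 0 <= phi j0 y * (a j0 x - lo x) by apply: mulr_ge0; lra.
  have h3 : 0 <= (1 - phi j0 y) * (hi x - c x) by apply: mulr_ge0; lra.
  have h4 : 0 <= phi j0 y * (hi x - a j0 x) by apply: mulr_ge0; lra.
  have e1 : c x + phi j0 y * (a j0 x - c x) - lo x =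
    (1 - phi j0 y) * (c x - lo x) + phi j0 y * (a j0 x - lo x) by ring.
  have e2 : hi x - (c x + phi j0 y * (a j0 x - c x)) =
    (1 - phi j0 y) * (hi x - c x) + phi j0 y * (hi x - a j0 x) by ring.
  apply/andP; split; lra.
move=> x j.
have hs : forall i, i != j -> phi i (ys j) = 0.
  move=> i ij; apply/eqP; apply: contraT => hi0.
  have hj : phi j (ys j) != 0 by rewrite phiy oner_neq0.
  by move: ij; rewrite (disj _ _ _ hi0 hj) eqxx.
by rewrite (single (ys j) j hs x) phiy mul1r addrC subrK.
Qed.
End Combine.

Section Main.
Lemma main_thm (R : realType) (X Y : topologicalType)
  (g h : X -> \bar R) :
  completely_regular R Y ->
  infinite_set [set: Y] ->
  stable_Hahn_pair g h ->
  exists f : X * Y -> \bar R,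
    separately_continuous f /\
    (forall x : X, is_min_attained (fun y : Y => f (x, y)) (g x) /\
                   is_max_attained (fun y : Y => f (x, y)) (h x)).
Proof.
move=> cr infY [u [cu hu]].
pose U n x := contract (u n x).
pose G x := contract (g x).
pose H x := contract (h x).
have cU : forall n, continuous (U n) by move=> n; exact/(contract_cont _).1.
have bU : forall n x, -1 <= U n x <= 1 by move=> n x; rewrite -ler_norml contract_le1.
have hG : forall x, (exists n, U n x = G x) /\ (forall n, G x <= U n x).
  move=> x; have [[[n hn] hl] _] := hu x; split; first by exists n; rewrite /U hn.
  by move=> m; rewrite /G /U le_contract.
have hH : forall x, (exists n, U n x = H x) /\ (forall n, U n x <= H x).
  move=> x; have [_ [[n hn] hl]] := hu x; split; first by exists n; rewrite /U hn.
  by move=> m; rewrite /H /U le_contract.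
have bc : forall x, G x <= U 0%N x <= H x.
  by move=> x; rewrite (hG x).2 (hH x).2.
have [phi [ys [cphi [bphi [phiy disj]]]]] := bumps cr infY.
have [F [cFx [cFy [bF Fy]]]] := combine (cU 0%N) (fun j => @cont_aa _ _ _ cU j) cphi bphi phiy disj
  (aa_fin hG hH) bc (aa_bd hG hH).
have F1 : forall x y, `|F x y| <= 1.
  move=> x y; rewrite ler_norml; have /andP[a b] := bF x y.
  have /andP[c _] := G_bd bU hG x; have /andP[_ d] := H_bd bU hH x.
  apply/andP; split; [exact: le_trans c a | exact: le_trans b d].
have FK : forall x y, contract (expand (F x y)) = F x y.
  by move=> x y; apply: expandK; rewrite inE F1.
exists (fun p => expand (F p.1 p.2)); split.
  split.
    move=> x; apply/(contract_cont _).2 => /=.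
    have -> : (fun y => contract (expand (F x y))) = F x by apply: funext => y; exact: FK.
    exact: cFx.
  move=> y; apply/(contract_cont _).2 => /=.
  have -> : (fun x => contract (expand (F x y))) = (fun x => F x y) by apply: funext => x; exact: FK.
  exact: cFy.
move=> x; split; split => /=.
- have [j hj] := aa_minatt bU hG x.
  by exists (ys j); rewrite Fy hj /G contractK.
- move=> y; rewrite -le_contract FK; have /andP[] := bF x y => //.
- have [j hj] := aa_maxatt bU hH x.
  by exists (ys j); rewrite Fy hj /H contractK.
- move=> y; rewrite -le_contract FK; have /andP[] := bF x y => //.
Qed.
End Main.

Local Close Scope ring_scope.
Unset Implicit Arguments.

Theorem theorem8p1 (R : realType) (X Y : topologicalType)
  (g h : X -> \bar R) :
  completely_regular R Y ->
  infinite_set [set: Y] ->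
  stable_Hahn_pair g h ->
  exists f : X * Y -> \bar R,
    separately_continuous f /\
    (forall x : X, is_min_attained (fun y : Y => f (x, y)) (g x) /\
                   is_max_attained (fun y : Y => f (x, y)) (h x)).
Proof. exact: main_thm. Qed.
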